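(* The Goldman Lie algebra $\mathfrak{G}_{\Sigma_{1,0}}$ of the closed torus over $\mathbb{Q}$ is generated, as a Lie algebra over $\mathbb{Q}$, by the three elements $a$, $a^{-1}b^{-1}+b+1$, and $b$.
   Context: Let $\Sigma_{1,0}=T^2$ be the closed oriented torus and $\hat\pi$ its set of free homotopy classes of loops, identified with $\pi_1(T^2)\cong\mathbb{Z}^2$; with $a,b$ the standard generators, every class is written $a^ib^j$, $(i,j)\in\mathbb{Z}^2$, and $1=a^0b^0$ is the class of the contractible loop. The Goldman bracket (defined for classes meeting transversally by $[\alpha,\beta]=\sum_{p\in\alpha\cap\beta}\epsilon(p)\,\alpha*_p\beta$, with $\epsilon(p)$ the intersection sign and $\alpha*_p\beta$ the loop product at $p$, extended bilinearly) is given on the torus by $[a^ib^j,a^kb^l]=(il-jk)\,a^{i+k}b^{j+l}$. $\mathfrak{G}_{\Sigma_{1,0}}$ denotes the $\mathbb{Q}$-vector space with basis $\hat\pi$ with this bracket. *)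

(* Defs.v *)
(* multinomials' monoid algebra {malg R[K]} = finitely
   supported functions K -> R, used as the free Q-vector space on pi-hat. *)
From HB Require Import structures.
From mathcomp Require Import all_boot all_order all_algebra.
From mathcomp Require Import finmap.
From mathcomp Require Import monalg.
Set Implicit Arguments. Unset Strict Implicit. Unset Printing Implicit Defensive.
Import Order.TTheory GRing.Theory Num.Theory.
Local Open Scope ring_scope.

(* free homotopy classes of loops on T^2 : a^i b^j <-> (i, j) in Z^2 *)
Definition pihat := (int * int)%type.

Definition goldman := {malg rat[pihat]}.

Definition cls (i j : int) : goldman := << ((i, j) : pihat) >>.

Definition gbracket (x y : goldman) : goldman :=
  \sum_(p <- msupp x) \sum_(q <- msupp y)
     << (x@_p * y@_q * ((p.1 * q.2 - p.2 * q.1)%:~R : rat)) *g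
        ((p.1 + q.1, p.2 + q.2) : pihat) >>.

Inductive lie_generated (S : goldman -> Prop) : goldman -> Prop :=
  | lg_gen x : S x -> lie_generated S x
  | lg_zero : lie_generated S 0
  | lg_add x y : lie_generated S x -> lie_generated S y -> lie_generated S (x + y)
  | lg_scale (c : rat) x : lie_generated S x -> lie_generated S (c *: x)
  | lg_bracket x y : lie_generated S x -> lie_generated S y ->
      lie_generated S (gbracket x y).

(* Main.v *)
Require Import Defs.
From HB Require Import structures.
From mathcomp Require Import all_boot all_order all_algebra zify.
From mathcomp Require Import finmap.
From mathcomp Require Import monalg.
Set Implicit Arguments. Unset Strict Implicit. Unset Printing Implicit Defensive.
Import Order.TTheory GRing.Theory Num.Theory.
Local Open Scope ring_scope.

Lemma int_ind2 (P : int -> Prop) : P 0 -> (forall m, P m -> P (m+1)) ->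
  (forall m, P m -> P (m-1)) -> forall m, P m.
Proof.
move=> P0 Hs Hp m; case: m => n.
  elim: n => // n IH. have -> : Posz n.+1 = Posz n + 1 by lia. exact: Hs.
elim: n => [|n IH]. have -> : Negz 0 = 0 - 1 by lia. exact: Hp.
have -> : Negz n.+1 = Negz n - 1 by lia. exact: Hp.
Qed.

Definition gF (x y : goldman) (p q : pihat) : goldman :=
  << (x@_p * y@_q * ((p.1 * q.2 - p.2 * q.1)%:~R : rat)) *g
        ((p.1 + q.1, p.2 + q.2) : pihat) >>.

Lemma gbracketw (d1 d2 : {fset pihat}) x y :
  (msupp x `<=` d1)%fset -> (msupp y `<=` d2)%fset ->
  gbracket x y = \sum_(p <- d1) \sum_(q <- d2) gF x y p q.
Proof.
move=> le1 le2; rewrite /gbracket (big_fset_incl _ le1) /=.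
  apply/eq_bigr=> p _; apply/big_fset_incl => // q _ /mcoeff_outdom ->.
  by rewrite /gF mulr0 mul0r monalgU0.
move=> p _ /mcoeff_outdom xp.
by rewrite big1 => // q _; rewrite xp mul0r mul0r monalgU0.
Qed.

Lemma gbracketDl x1 x2 y : gbracket (x1 + x2) y = gbracket x1 y + gbracket x2 y.
Proof.
have h1 : (msupp x1 `<=` msupp x1 `|` msupp x2)%fset by apply: fsubsetUl.
have h2 : (msupp x2 `<=` msupp x1 `|` msupp x2)%fset by apply: fsubsetUr.
rewrite (gbracketw (msuppD_le x1 x2) (fsubset_refl (msupp y))).
rewrite (gbracketw h1 (fsubset_refl (msupp y))) (gbracketw h2 (fsubset_refl (msupp y))).
rewrite -big_split /=; apply: eq_bigr => p _; rewrite -big_split /=.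
by apply: eq_bigr => q _; rewrite /gF mcoeffD !mulrDl monalgUD.
Qed.

Lemma gbracketU (i j k l : int) :
  gbracket (cls i j) (cls k l) = ((i * l - j * k)%:~R : rat) *: cls (i + k) (j + l).
Proof.
rewrite /gbracket /cls !msuppU oner_eq0 !big_seq_fset1 /= !mcoeffUU !mul1r.
apply/malgP => r; rewrite mcoeffZ !mcoeffU.
by case: eqP => _; rewrite ?mulr1n ?mulr0n ?mulr1 ?mulr0.
Qed.

Definition S0 (y : goldman) : Prop :=
  y = cls 1 0 \/ y = cls (-1) (-1) + cls 0 1 + cls 0 0 \/ y = cls 0 1.
Notation L := (lie_generated S0).

Lemma LB x y : L x -> L y -> L (x - y).
Proof. by move=> hx hy; rewrite -scaleN1r; apply: lg_add => //; apply: lg_scale. Qed.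

Lemma Lunscale (c : rat) i j : c != 0 -> L (c *: cls i j) -> L (cls i j).
Proof. by move=> c0 h; rewrite -(scale1r (cls i j)) -(mulVf c0) -scalerA; apply: lg_scale. Qed.

Lemma brk i j k l : L (cls i j) -> L (cls k l) -> i * l - j * k != 0 ->
  L (cls (i + k) (j + l)).
Proof.
move=> h1 h2 hd; apply: (@Lunscale ((i * l - j * k)%:~R)).
  by rewrite intr_eq0.
by rewrite -gbracketU; apply: lg_bracket.
Qed.

Lemma La : L (cls 1 0). Proof. by apply: lg_gen; left. Qed.
Lemma Lb : L (cls 0 1). Proof. by apply: lg_gen; right; right. Qed.
Lemma Lc : L (cls (-1) (-1) + cls 0 1 + cls 0 0). Proof. by apply: lg_gen; right; left. Qed.

Lemma br00 y : gbracket (cls 0 0) y = 0.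
Proof.
rewrite /gbracket /cls msuppU oner_eq0 big_seq_fset1 /=.
by apply: big1 => q _; rewrite !mul0r subrr mulr0 monalgU0.
Qed.

Lemma Lm k l : L (cls k l) -> k - l != 0 -> L (cls (k - 1) (l - 1)).
Proof.
move=> h hd; apply: (@Lunscale ((k - l)%:~R)); first by rewrite intr_eq0.
have -> : ((k - l)%:~R : rat) *: cls (k - 1) (l - 1) =
   gbracket (cls (-1) (-1)) (cls k l).
  rewrite gbracketU.
  have -> : (-1 * l - -1 * k) = k - l by lia.
  have -> : (-1 + k) = k - 1 by lia.
  have -> : (-1 + l) = l - 1 by lia.
  done.
have -> : gbracket (cls (-1) (-1)) (cls k l) =
   gbracket (cls (-1) (-1) + cls 0 1 + cls 0 0) (cls k l) - gbracket (cls 0 1) (cls k l).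
  rewrite !gbracketDl br00 addr0.
  rewrite addrK.
  done.
by apply: LB; apply: lg_bracket => //; [exact: Lc | exact: Lb].
Qed.


Lemma brk2 i j k l i' j' : L (cls i j) -> L (cls k l) -> i * l - j * k != 0 ->
  i' = i + k -> j' = j + l -> L (cls i' j').
Proof. by move=> h1 h2 hd -> ->; apply: brk. Qed.

Lemma Lcast i j i' j' : L (cls i j) -> i = i' -> j = j' -> L (cls i' j').
Proof. by move=> h <- <-. Qed.

Lemma L01m : L (cls 0 (-1)).
Proof. by apply: (Lcast (Lm La _)); lia. Qed.

Lemma Lm10 : L (cls (-1) 0).
Proof. by apply: (Lcast (Lm Lb _)); lia. Qed.

Lemma Lm1m1 : L (cls (-1) (-1)).
Proof. by have := brk Lm10 L01m isT. Qed.

Lemma zm1 (V : zmodType) (a b c : V) : c = a + b + c - b - a.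
Proof. by rewrite [_ + c]addrC addrA addrK addrK. Qed.

Lemma L00 : L (cls 0 0).
Proof.
rewrite (zm1 (cls (-1) (-1)) (cls 0 1) (cls 0 0)).
by apply: LB; [apply: LB; [exact: Lc | exact: Lb] | exact: Lm1m1].
Qed.

Lemma shiftj i j : i != 0 -> L (cls i j) -> forall l, L (cls i l).
Proof.
move=> i0 h l; have -> : l = j + (l - j) by lia.
elim/int_ind2: (l - j) => [|m IH|m IH]; first by rewrite addr0.
  by apply: (brk2 IH Lb); lia.
by apply: (brk2 IH L01m); lia.
Qed.

Lemma shifti i j : j != 0 -> L (cls i j) -> forall k, L (cls k j).
Proof.
move=> j0 h k; have -> : k = i + (k - i) by lia.
elim/int_ind2: (k - i) => [|m IH|m IH]; first by rewrite addr0.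
  by apply: (brk2 La IH); lia.
by apply: (brk2 Lm10 IH); lia.
Qed.

Lemma Lall i j : L (cls i j).
Proof.
have Lj : forall j, j != 0 -> forall i, L (cls i j).
  by move=> j' j0 i'; apply: (shifti j0 (shiftj (oner_neq0 _) La j')).
have [->|j0] := eqVneq j 0; last exact: Lj.
have [->|i0] := eqVneq i 0; first exact: L00.
by apply: (brk2 (Lj 1 (oner_neq0 _) i) L01m); lia.
Qed.

Lemma UZ (c : rat) (k : pihat) : << c *g k >> = c *: cls k.1 k.2.
Proof.
case: k => i j /=; apply/malgP => r; rewrite mcoeffZ !mcoeffU.
by case: eqP => _; rewrite ?mulr1n ?mulr0n ?mulr1 ?mulr0.
Qed.

Theorem mainTheorem2 :
  forall x : goldman,
    lie_generated
      (fun y => y = cls 1 0 \/ y = cls (-1) (-1) + cls 0 1 + cls 0 0 \/ y = cls 0 1)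
      x.
Proof.
move=> x; rewrite (monalgE x); apply: big_rec => [|k y _ hy]; first exact: lg_zero.
by apply: lg_add => //; rewrite UZ; apply: lg_scale; apply: Lall.
Qed.
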